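(* In the setting below, define for $y\in B_r$ $$\psi(y)=\sup_{x\in A:\ \varphi(x)\le|y|}\langle x,y\rangle .$$ Then $\psi(y)=\langle T^{-1}(y),y\rangle$ for $\nu$-almost all $y$.
   Context: Setting: $d\ge2$, $A\subset\mathbb{R}^d$ compact convex, $\mu=\varrho_0\,dx$ a probability measure on $A$ equivalent to Lebesgue measure on $A$, $B_r=\{|x|\le r\}$, $\nu=\varrho_1\,dx$ a probability measure on $B_r$ equivalent to Lebesgue measure on $B_r$. For a compact convex $V$ and $x\in V$, $N_{\partial V,x}=\{\eta\in S^{d-1}:\langle\eta,z-x\rangle\le0\ \forall z\in V\}$. Let $\varphi\colon A\to[0,r]$ be continuous with convex sub-level sets $A_s=\{\varphi\le s\}$; for $x$ with $N_{\partial A_{\varphi(x)},x}$ a singleton let ${\rm n}(x)$ be its element and $T(x)=\varphi(x){\rm n}(x)$ (defined a.e.); assume $\mu\circ T^{-1}=\nu$. $T^{-1}\colon B_r\to A$ denotes a measurable map with $T(T^{-1}(y))=y$ for $\nu$-a.e. $y$ and $T^{-1}(T(x))=x$ for $\mu$-a.e. $x$ (it exists and is $\nu$-a.e. unique). *)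

(* Defs.v *)
From HB Require Import structures.
From mathcomp Require Import all_boot all_order all_algebra.
From mathcomp Require Import all_classical all_reals all_analysis.
Set Implicit Arguments. Unset Strict Implicit. Unset Printing Implicit Defensive.
Import Order.TTheory GRing.Theory Num.Theory.
Import numFieldNormedType.Exports.
Local Open Scope classical_set_scope.
Local Open Scope ring_scope.

(* R^d is represented by row vectors 'rV[R]_d, with its usual (product =
   Euclidean) topology; it is equipped with the Borel sigma-algebra, i.e. the
   sigma-algebra generated by the open sets. *)
Definition Rd (R : realType) (d : nat) :=
  g_sigma_algebraType (@open ('rV[R]_d)).

Definition dotv (R : realType) (d : nat) (x y : 'rV[R]_d) : R :=
  \sum_(i < d) x 0 i * y 0 i.
Definition enorm (R : realType) (d : nat) (x : 'rV[R]_d) : R :=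
  Num.sqrt (dotv x x).

Definition cballR (R : realType) (d : nat) (r : R) : set 'rV[R]_d :=
  [set x | enorm x <= r].

Definition convex_setRd (R : realType) (d : nat) (V : set 'rV[R]_d) : Prop :=
  @convex_set R _ (V : set (convex_lmodType 'rV[R]_d)).

Definition box (R : realType) (d : nat) (a b : 'rV[R]_d) : set 'rV[R]_d :=
  [set x | forall i, a 0 i <= x 0 i <= b 0 i].

(* a measure on the Borel sets of R^d is the Lebesgue measure iff it gives
   every box its volume (this determines it uniquely on Borel sets) *)
Definition is_lebesgue (R : realType) (d : nat)
    (leb : {measure set (Rd R d) -> \bar R}) : Prop :=
  forall a b : 'rV[R]_d, (forall i, a 0 i <= b 0 i) ->
    leb (box a b) = (\prod_(i < d) (b 0 i - a 0 i))%:E.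

(* a probability measure m on R^d which is "a probability measure on V
   equivalent to Lebesgue measure on V", i.e. m = rho dx with rho supported
   on V, and m(E) = 0 iff Leb(E /\ V) = 0 *)
Definition equiv_leb_on (R : realType) (d : nat)
    (leb : {measure set (Rd R d) -> \bar R})
    (m : probability (Rd R d) R) (V : set 'rV[R]_d) : Prop :=
  [/\ exists rho : Rd R d -> R,
        [/\ measurable_fun setT rho, (forall x, 0 <= rho x),
            (forall x, ~ V x -> rho x = 0) &
            forall E, measurable E ->
              m E = (\int[leb]_(x in E) (rho x)%:E)%E],
      m (~` V) = 0%E &
      forall E, measurable E -> (m E = 0%E <-> leb (E `&` V) = 0%E)].

Definition normal_cone (R : realType) (d : nat) (V : set 'rV[R]_d)
    (x : 'rV[R]_d) : set 'rV[R]_d :=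
  [set eta | enorm eta = 1 /\ forall z, V z -> dotv eta (z - x) <= 0].

Definition sublevel (R : realType) (d : nat) (A : set 'rV[R]_d)
    (phi : 'rV[R]_d -> R) (s : R) : set 'rV[R]_d :=
  [set x | A x /\ phi x <= s].

(* psi(y) = sup_{x in A, phi x <= |y|} <x, y>  (sup of the empty set = -oo) *)
Definition psi (R : realType) (d : nat) (A : set 'rV[R]_d)
    (phi : 'rV[R]_d -> R) (y : 'rV[R]_d) : \bar R :=
  ereal_sup [set (dotv x y)%:E | x in sublevel A phi (enorm y)].

(* Main.v *)
Require Import Defs.
From HB Require Import structures.
From mathcomp Require Import all_boot all_order all_algebra.
From mathcomp Require Import all_classical all_reals all_analysis.
From mathcomp Require Import ring lra.
Import Order.TTheory GRing.Theory Num.Theory.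
Import numFieldNormedType.Exports.
Local Open Scope classical_set_scope.
Local Open Scope ring_scope.

Section H.
Variables (R : realType) (d : nat).
Implicit Types a b : 'rV[R]_d.

Lemma dotvZr a b c : dotv a (c *: b) = c * dotv a b.
Proof. rewrite /dotv mulr_sumr; apply: eq_bigr => i _; rewrite mxE; ring. Qed.
Lemma dotvZl a b c : dotv (c *: a) b = c * dotv a b.
Proof. rewrite /dotv mulr_sumr; apply: eq_bigr => i _; rewrite mxE; ring. Qed.
Lemma dotvC a b : dotv a b = dotv b a.
Proof. rewrite /dotv; apply: eq_bigr => i _; exact: mulrC. Qed.
Lemma dotvBl a b c : dotv (a - b) c = dotv a c - dotv b c.
Proof. rewrite /dotv -sumrB; apply: eq_bigr => i _; rewrite !mxE mulrBl. by []. Qed.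
Lemma dotv_ge0 a : 0 <= dotv a a.
Proof. rewrite /dotv; apply: sumr_ge0 => i _; rewrite -expr2; exact: sqr_ge0. Qed.

Lemma enormZ a c : 0 <= c -> enorm a = 1 -> enorm (c *: a) = c.
Proof.
move=> c0 h; have h1 : dotv a a = 1.
  by rewrite -(@sqr_sqrtr _ (dotv a a)) ?dotv_ge0 // -/(enorm a) h expr1n.
by rewrite /enorm dotvZl dotvZr h1 mulr1 -expr2 sqrtr_sqr ger0_norm.
Qed.

Lemma core (A : set 'rV[R]_d) (phi : 'rV[R]_d -> R) x eta :
  A x -> 0 <= phi x -> normal_cone (sublevel A phi (phi x)) x = [set eta] ->
  psi A phi (phi x *: eta) = (dotv x (phi x *: eta))%:E.
Proof.
move=> Ax p0 hN.
have : normal_cone (sublevel A phi (phi x)) x eta by rewrite hN.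
move=> [he hle].
rewrite /psi enormZ //; apply/le_anti/andP; split.
- apply: ge_ereal_sup => _ [z [Az hz] <-]; rewrite lee_fin !dotvZr.
  apply: ler_wpM2l => //.
  have := hle z (conj Az hz); rewrite dotvC dotvBl !(dotvC _ eta).
  by rewrite subr_le0.
- apply: ereal_sup_ubound; exists x => //.
Qed.
End H.

Lemma mAC (R : realType) d (A : set 'rV[R]_d) : compact A -> measurable (~` A : set (Rd R d)).
Proof.
move=> cA. have cl : closed A by apply: compact_closed.
apply: sub_sigma_algebra. rewrite /=. exact: closed_openC.
Qed.

Theorem lemma12 (R : realType) (d : nat) (hd : (2 <= d)%N)
  (leb : {measure set (Rd R d) -> \bar R}) (hleb : is_lebesgue leb)
  (A : set 'rV[R]_d) (hAc : compact A) (hAv : convex_setRd A)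
  (mu : probability (Rd R d) R) (hmu : equiv_leb_on leb mu A)
  (r : R) (hr : 0 < r)
  (nu : probability (Rd R d) R) (hnu : equiv_leb_on leb nu (cballR r))
  (phi : 'rV[R]_d -> R) (hphic : {within A, continuous phi})
  (hphir : forall x, A x -> 0 <= phi x <= r)
  (hphiv : forall s, convex_setRd (sublevel A phi s))
  (T : Rd R d -> Rd R d) (hTm : measurable_fun setT T)
  (hTdef : {ae mu, forall x : Rd R d,
     exists eta, normal_cone (sublevel A phi (phi x)) x = [set eta]})
  (hT : {ae mu, forall x : Rd R d, forall eta,
     normal_cone (sublevel A phi (phi x)) x = [set eta] ->
     T x = phi x *: eta})
  (hpush : forall E, measurable E -> mu (T @^-1` E) = nu E)
  (Tinv : Rd R d -> Rd R d) (hTinvm : measurable_fun setT Tinv)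
  (hTinvA : forall y, cballR r y -> A (Tinv y))
  (hTTinv : {ae nu, forall y : Rd R d, T (Tinv y) = y})
  (hTinvT : {ae mu, forall x : Rd R d, Tinv (T x) = x}) :
  {ae nu, forall y : Rd R d, psi A phi y = (dotv (Tinv y) y)%:E}.
Proof.
pose G0 := [set x : Rd R d | A x /\
   (exists eta, normal_cone (sublevel A phi (phi x)) x = [set eta]) /\
   (forall eta, normal_cone (sublevel A phi (phi x)) x = [set eta] ->
     T x = phi x *: eta)].
have hA : mu.-negligible (~` A : set (Rd R d)).
  apply/negligibleP; first exact: mAC.
  by case: hmu.
have hG : mu.-negligible (~` G0).
  apply: (negligibleS _ (negligibleU (negligibleU hA hTdef) hT)).
  move=> x /= nG; apply: contrapT => hu; apply: nG.
  split; first by apply: contrapT => h; apply: hu; left; left.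
  split; first by apply: contrapT => h; apply: hu; left; right.
  by apply: contrapT => h; apply: hu; right.
case: hG => N [mN N0 sN].
case: hTinvT => M [mM M0 sM].
have mE : measurable (Tinv @^-1` N : set (Rd R d)).
  by have := hTinvm measurableT _ mN; rewrite setTI.
have hE : nu.-negligible (Tinv @^-1` N : set (Rd R d)).
  apply/negligibleP => //. transitivity (mu (T @^-1` (Tinv @^-1` N))); first exact: esym (hpush _ mE).
  apply: measure_negligible.
    by have := hTm measurableT _ mE; rewrite setTI.
  apply: (negligibleS _ (negligibleU (proj2 (@negligibleP _ _ _ mu _ mN) N0)
                                     (proj2 (@negligibleP _ _ _ mu _ mM) M0))).
  move=> x /= hx; have [hM|hM] := pselect (M x); first by right.
  left; suff <- : Tinv (T x) = x by [].
  by apply: contrapT => h; apply: hM; apply: sM.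
apply: (negligibleS _ (negligibleU hE hTTinv)).
move=> y /= hy; have [hN|hN] := pselect (N (Tinv y)); first by left.
right => hTy; apply: hy.
have : G0 (Tinv y) by apply: contrapT => h; apply: hN; apply: sN.
move=> [Ax [[eta he] hT']].
move: (Tinv y) Ax he hT' hTy => x Ax he hT' hTy.
rewrite -hTy (hT' eta he).
apply: core => //; by case/andP: (hphir _ Ax).
Qed.
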